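(* There exist $\mathrm{x},\mathrm{y}\in T\mathbb{R}^2$ and a path of type RSL in $\Gamma(\mathrm{x},\mathrm{y})$ that is bounded-homotopic in $\Gamma(\mathrm{x},\mathrm{y})$ to a path of type LSR in $\Gamma(\mathrm{x},\mathrm{y})$. (In words: an RSL Dubins path can sometimes be deformed into an LSR Dubins path.)
   Context: Elements of $T\mathbb{R}^2$ are pairs $\mathrm{x}=(x,X)$ with $x\in\mathbb{R}^2$ and $X$ a unit tangent vector. A bounded curvature path from $\mathrm{x}=(x,X)$ to $\mathrm{y}=(y,Y)$ is a $C^1$, piecewise $C^2$ path $\gamma:[0,s]\to\mathbb{R}^2$ parametrized by arc length with $\gamma(0)=x,\gamma'(0)=X,\gamma(s)=y,\gamma'(s)=Y$ and $\|\gamma''\|\le1$ wherever defined; $\Gamma(\mathrm{x},\mathrm{y})$ is the space of these with the $C^1$ metric. A bounded curvature homotopy is a continuous one-parameter family $p\in[0,1]\mapsto\mathcal{H}(p)\in\Gamma(\mathrm{x},\mathrm{y})$ joining two paths; paths so joined are bounded-homotopic. A CSC (Dubins) path is a concatenation of an arc of a unit circle of length less than $2\pi$, a line segment, and an arc of a unit circle of length less than $2\pi$; R denotes a clockwise traversed arc, L a counterclockwise traversed arc, S the segment, so RSL is clockwise arc–segment–counterclockwise arc and LSR is counterclockwise arc–segment–clockwise arc. *)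

(* Defs.v *)
From Stdlib Require Import Reals Lra.
Open Scope R_scope.

Definition vec := (R * R)%type.
Definition vsub (u v : vec) : vec := (fst u - fst v, snd u - snd v).
Definition vscale (c : R) (u : vec) : vec := (c * fst u, c * snd u).
Definition vnorm (u : vec) : R := sqrt (fst u ^ 2 + snd u ^ 2).
Definition vdist (u v : vec) : R := vnorm (vsub u v).
Definition unit_vec (u : vec) : Prop := fst u ^ 2 + snd u ^ 2 = 1.

Definition rot (th : R) (u : vec) : vec :=
  (cos th * fst u - sin th * snd u, sin th * fst u + cos th * snd u).

Definition Icc (a b : R) (t : R) : Prop := a <= t <= b.

Definition deriv_within (D : R -> Prop) (f : R -> vec) (t : R) (l : vec) : Prop :=
  forall eps, 0 < eps -> exists delta, 0 < delta /\
    forall u, D u -> u <> t -> Rabs (u - t) < delta ->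
      vdist (vscale (/ (u - t)) (vsub (f u) (f t))) l <= eps.

Definition cont_within (D : R -> Prop) (f : R -> vec) (t : R) : Prop :=
  forall eps, 0 < eps -> exists delta, 0 < delta /\
    forall u, D u -> Rabs (u - t) < delta -> vdist (f u) (f t) < eps.

(* Bounded curvature path from (x,X) to (y,Y): g : [0,s] -> R^2 with
   derivative dg; C^1, arc-length parametrized, piecewise C^2 with
   |g''| <= 1 where defined. *)
Definition bcp (x X y Y : vec) (s : R) (g dg : R -> vec) : Prop :=
  0 < s /\ unit_vec X /\ unit_vec Y /\
  (forall t, Icc 0 s t -> deriv_within (Icc 0 s) g t (dg t)) /\
  (forall t, Icc 0 s t -> cont_within (Icc 0 s) dg t) /\
  (forall t, Icc 0 s t -> vnorm (dg t) = 1) /\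
  g 0 = x /\ dg 0 = X /\ g s = y /\ dg s = Y /\
  exists (k : nat) (tau : nat -> R) (dd : nat -> R -> vec),
    tau 0%nat = 0 /\ tau k = s /\
    (forall i, (i < k)%nat -> tau i < tau (S i)) /\
    (forall i, (i < k)%nat -> forall t, Icc (tau i) (tau (S i)) t ->
        deriv_within (Icc (tau i) (tau (S i))) dg t (dd i t) /\
        cont_within (Icc (tau i) (tau (S i))) (dd i) t /\
        vnorm (dd i t) <= 1).

(* CSC type RSL: clockwise arc (tangent rotates clockwise at unit rate),
   segment (tangent constant), counterclockwise arc. *)
Definition is_RSL (s : R) (dg : R -> vec) : Prop :=
  exists a l b, 0 < a < 2 * PI /\ 0 < l /\ 0 < b < 2 * PI /\ s = a + l + b /\
    (forall t, Icc 0 a t -> dg t = rot (- t) (dg 0)) /\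
    (forall t, Icc a (a + l) t -> dg t = dg a) /\
    (forall t, Icc (a + l) s t -> dg t = rot (t - (a + l)) (dg (a + l))).

Definition is_LSR (s : R) (dg : R -> vec) : Prop :=
  exists a l b, 0 < a < 2 * PI /\ 0 < l /\ 0 < b < 2 * PI /\ s = a + l + b /\
    (forall t, Icc 0 a t -> dg t = rot t (dg 0)) /\
    (forall t, Icc a (a + l) t -> dg t = dg a) /\
    (forall t, Icc (a + l) s t -> dg t = rot (- (t - (a + l))) (dg (a + l))).

(* C^1 metric: paths reparametrized on [0,1], c(t) = g(s t), c'(t) = s dg(s t);
   a homotopy is a family p in [0,1] |-> path in Gamma(x,y), continuous for the
   C^1 (sup) metric, joining path 1 (at p=0) to path 2 (at p=1). *)
Definition bounded_homotopic (x X y Y : vec)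
  (s1 : R) (g1 dg1 : R -> vec) (s2 : R) (g2 dg2 : R -> vec) : Prop :=
  exists (S : R -> R) (G DG : R -> R -> vec),
    (forall p, Icc 0 1 p -> bcp x X y Y (S p) (G p) (DG p)) /\
    (forall p0, Icc 0 1 p0 -> forall eps, 0 < eps -> exists delta, 0 < delta /\
       forall p, Icc 0 1 p -> Rabs (p - p0) < delta -> forall t, Icc 0 1 t ->
         vdist (G p (S p * t)) (G p0 (S p0 * t)) < eps /\
         vdist (vscale (S p) (DG p (S p * t)))
               (vscale (S p0) (DG p0 (S p0 * t))) < eps) /\
    S 0 = s1 /\ (forall t, Icc 0 s1 t -> G 0 t = g1 t /\ DG 0 t = dg1 t) /\
    S 1 = s2 /\ (forall t, Icc 0 s2 t -> G 1 t = g2 t /\ DG 1 t = dg2 t).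

(* Main.v *)
Require Import Defs.
From Stdlib Require Import Reals Lra Lia List.
From Coquelicot Require Import Coquelicot.
Open Scope R_scope.

Lemma sqrt_sum_le (a b : R) : sqrt (a^2 + b^2) <= Rabs a + Rabs b.
Proof.
  rewrite <- (sqrt_pow2 (Rabs a + Rabs b)) by (pose proof (Rabs_pos a); pose proof (Rabs_pos b); lra).
  apply sqrt_le_1_alt.
  rewrite <- (pow2_abs a), <- (pow2_abs b).
  pose proof (Rabs_pos a); pose proof (Rabs_pos b). nra.
Qed.

Lemma vdist_le (u v : vec) : vdist u v <= Rabs (fst u - fst v) + Rabs (snd u - snd v).
Proof. unfold vdist, vnorm, vsub; simpl. apply sqrt_sum_le. Qed.

Lemma deriv_of_lim D f1 f2 t l1 l2 :
  derivable_pt_lim f1 t l1 -> derivable_pt_lim f2 t l2 ->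
  deriv_within D (fun u => (f1 u, f2 u)) t (l1, l2).
Proof.
  intros H1 H2 eps Heps.
  destruct (H1 (eps/2) ltac:(lra)) as [d1 Hd1].
  destruct (H2 (eps/2) ltac:(lra)) as [d2 Hd2].
  exists (Rmin d1 d2). split. { apply Rmin_pos; apply cond_pos. }
  intros u _ Hne Hlt.
  assert (Hh : u - t <> 0) by lra.
  pose proof (Rmin_l d1 d2); pose proof (Rmin_r d1 d2).
  specialize (Hd1 (u - t) Hh ltac:(lra)).
  specialize (Hd2 (u - t) Hh ltac:(lra)).
  replace (t + (u - t)) with u in Hd1, Hd2 by ring.
  eapply Rle_trans; [apply vdist_le|]. simpl.
  unfold Rdiv in Hd1, Hd2.
  rewrite (Rmult_comm (f1 u - f1 t)) in Hd1.
  rewrite (Rmult_comm (f2 u - f2 t)) in Hd2. lra.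
Qed.

Lemma deriv_within_ext D f f' t l :
  (forall u, D u -> f u = f' u) -> D t -> deriv_within D f' t l -> deriv_within D f t l.
Proof.
  intros Hext Ht H eps Heps. destruct (H eps Heps) as [d [Hd H']].
  exists d; split; auto. intros u Hu Hne Hlt.
  rewrite (Hext u Hu), (Hext t Ht). auto.
Qed.

Lemma lip_cont_within D f t K :
  0 <= K -> (forall u, vdist (f u) (f t) <= K * Rabs (u - t)) -> cont_within D f t.
Proof.
  intros HK H eps Heps. exists (eps / (K + 1)). split.
  { apply Rdiv_lt_0_compat; lra. }
  intros u _ Hu. eapply Rle_lt_trans; [apply H|].
  apply Rle_lt_trans with ((K+1) * Rabs (u - t)).
  { pose proof (Rabs_pos (u - t)); nra. }
  apply Rmult_lt_reg_r with (/ (K+1)). { apply Rinv_0_lt_compat; lra. }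
  replace ((K + 1) * Rabs (u - t) * / (K + 1)) with (Rabs (u - t)) by (field; lra).
  exact Hu.
Qed.

Lemma lip_continuous (f : R -> R) K x :
  0 <= K -> (forall u, Rabs (f u - f x) <= K * Rabs (u - x)) -> continuous f x.
Proof.
  intros HK H. apply continuity_pt_filterlim.
  intros eps Heps. exists (eps / (K + 1)). split.
  { apply Rdiv_lt_0_compat; lra. }
  intros u [_ Hu]. unfold dist in *; simpl in *; unfold R_dist in *.
  eapply Rle_lt_trans; [apply H|].
  apply Rle_lt_trans with ((K+1) * Rabs (u - x)).
  { pose proof (Rabs_pos (u - x)); nra. }
  apply Rmult_lt_reg_r with (/ (K+1)). { apply Rinv_0_lt_compat; lra. }
  replace ((K + 1) * Rabs (u - x) * / (K + 1)) with (Rabs (u - x)) by (field; lra).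
  exact Hu.
Qed.

Lemma cos_lip a b : Rabs (cos a - cos b) <= Rabs (a - b).
Proof.
  destruct (MVT_gen cos b a (fun x => - sin x)) as [c [_ Hc]].
  - intros x _. apply is_derive_Reals. apply derivable_pt_lim_cos.
  - intros x _. apply continuity_cos.
  - rewrite Hc, Rabs_mult. pose proof (SIN_bound c).
    assert (Rabs (- sin c) <= 1) by (unfold Rabs; destruct Rcase_abs; lra).
    pose proof (Rabs_pos (a - b)). nra.
Qed.

Lemma sin_lip a b : Rabs (sin a - sin b) <= Rabs (a - b).
Proof.
  destruct (MVT_gen sin b a cos) as [c [_ Hc]].
  - intros x _. apply is_derive_Reals. apply derivable_pt_lim_sin.
  - intros x _. apply continuity_sin.
  - rewrite Hc, Rabs_mult. pose proof (COS_bound c).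
    assert (Rabs (cos c) <= 1) by (unfold Rabs; destruct Rcase_abs; lra).
    pose proof (Rabs_pos (a - b)). nra.
Qed.


Inductive kind := Lk | Rk | Sk.
Definition cv (k : kind) : R := match k with Lk => 1 | Rk => -1 | Sk => 0 end.
Definition clamp (u d : R) := Rmin (Rmax u 0) d.
Fixpoint hdg (P : list (kind * R)) (t : R) : R :=
  match P with nil => 0 | (k, d) :: P' => cv k * clamp t d + hdg P' (t - d) end.
Fixpoint tot (P : list (kind * R)) : R :=
  match P with nil => 0 | (_, d) :: P' => d + tot P' end.
Fixpoint turn (P : list (kind * R)) : R :=
  match P with nil => 0 | (k, d) :: P' => cv k * d + turn P' end.
Fixpoint pdist (P Q : list (kind * R)) : R :=
  match P, Q with ((_, d) :: P'), ((_, d') :: Q') => Rabs (d - d') + pdist P' Q' | _, _ => 0 end.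
Definition nneg (P : list (kind * R)) := List.Forall (fun kd => 0 <= snd kd) P.

Lemma cv_abs k : Rabs (cv k) <= 1.
Proof. destruct k; simpl; unfold Rabs; destruct Rcase_abs; lra. Qed.

Lemma clamp_lip u u' d d' : Rabs (clamp u d - clamp u' d') <= Rabs (u - u') + Rabs (d - d').
Proof.
  unfold clamp, Rmin, Rmax.
  repeat (destruct Rle_dec); unfold Rabs; repeat destruct Rcase_abs; lra.
Qed.

Lemma pdist_pos P Q : 0 <= pdist P Q.
Proof.
  revert Q; induction P as [|[k d] P IH]; intros [|[k' d'] Q]; simpl; try lra.
  pose proof (Rabs_pos (d - d')); pose proof (IH Q); lra.
Qed.

Lemma hd_lip P Q t t' : map fst P = map fst Q ->
  Rabs (hdg P t - hdg Q t') <= INR (length P) * (Rabs (t - t') + pdist P Q).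
Proof.
  revert Q t t'; induction P as [|[k d] P IH]; intros [|[k' d'] Q] t t' HPQ; cbn [hdg pdist length map fst] in *;
    try discriminate.
  - simpl. rewrite Rminus_0_r, Rabs_R0; lra.
  - injection HPQ as -> HPQ.
    specialize (IH Q (t - d) (t' - d') HPQ).
    pose proof (clamp_lip t t' d d').
    pose proof (cv_abs k').
    assert (Ha : Rabs (cv k' * clamp t d - cv k' * clamp t' d') <= Rabs (t - t') + Rabs (d - d')).
    { rewrite <- Rmult_minus_distr_l, Rabs_mult.
      pose proof (Rabs_pos (clamp t d - clamp t' d')). nra. }
    assert (Hb : Rabs (t - d - (t' - d')) <= Rabs (t - t') + Rabs (d - d')).
    { replace (t - d - (t' - d')) with ((t - t') + - (d - d')) by ring.
      eapply Rle_trans; [apply Rabs_triang|]. rewrite Rabs_Ropp. lra. }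
    replace (cv k' * clamp t d + hdg P (t - d) - (cv k' * clamp t' d' + hdg Q (t' - d')))
      with ((cv k' * clamp t d - cv k' * clamp t' d') + (hdg P (t - d) - hdg Q (t' - d'))) by ring.
    eapply Rle_trans; [apply Rabs_triang|].
    rewrite S_INR.
    pose proof (pos_INR (length P)). pose proof (pdist_pos P Q).
    pose proof (Rabs_pos (t - t')). pose proof (Rabs_pos (d - d')).
    pose proof (Rabs_pos (t - d - (t' - d'))).
    assert (INR (length P) * (Rabs (t - d - (t' - d')) + pdist P Q) <=
            INR (length P) * (Rabs (t - t') + Rabs (d - d') + pdist P Q)).
    { apply Rmult_le_compat_l; lra. }
    nra.
Qed.

Lemma pdist_self P : pdist P P = 0.
Proof. induction P as [|[k d] P IH]; simpl; auto. rewrite Rminus_diag, Rabs_R0, IH; ring. Qed.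

Lemma hd_lip1 P t t' : Rabs (hdg P t - hdg P t') <= INR (length P) * Rabs (t - t').
Proof.
  pose proof (hd_lip P P t t' eq_refl).
  rewrite pdist_self, Rplus_0_r in H. exact H.
Qed.

Lemma hd_le0 P t : nneg P -> t <= 0 -> hdg P t = 0.
Proof.
  revert t; induction P as [|[k d] P IH]; intros t HP Ht; simpl; auto.
  inversion HP; subst; simpl in *.
  rewrite IH by (auto; lra).
  unfold clamp, Rmax, Rmin. repeat destruct Rle_dec; try lra.
Qed.

Lemma hd_cons_in k d P t : nneg P -> 0 <= t <= d -> hdg ((k, d) :: P) t = cv k * t.
Proof.
  intros HP Ht; simpl. rewrite hd_le0 by (auto; lra).
  unfold clamp, Rmax, Rmin. repeat destruct Rle_dec; try lra.
  all: try (replace t with 0 by lra); ring.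
Qed.

Lemma hd_cons_ge k d P t : 0 <= d -> d <= t -> hdg ((k, d) :: P) t = cv k * d + hdg P (t - d).
Proof.
  intros Hd Ht; simpl. f_equal. f_equal.
  unfold clamp, Rmax, Rmin. repeat destruct Rle_dec; try lra.
Qed.

Lemma tot_nonneg P : nneg P -> 0 <= tot P.
Proof. induction 1 as [|[k d] P Hd HP IH]; simpl in *; lra. Qed.

Lemma hd_ge_tot P t : nneg P -> tot P <= t -> hdg P t = turn P.
Proof.
  revert t; induction P as [|[k d] P IH]; intros t HP Ht; simpl in *; auto.
  inversion HP; subst; simpl in *.
  pose proof (tot_nonneg P H2).
  rewrite IH by (auto; lra). f_equal. f_equal.
  unfold clamp, Rmax, Rmin. repeat destruct Rle_dec; try lra.
Qed.


Lemma cont_cos_hd (h : R) (P : list (kind * R)) (x : R) : continuous (fun u => cos (h + hdg P u)) x.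
Proof.
  apply (lip_continuous _ (INR (length P))). apply pos_INR.
  intros u. eapply Rle_trans; [apply cos_lip|].
  replace (h + hdg P u - (h + hdg P x)) with (hdg P u - hdg P x) by ring. apply hd_lip1.
Qed.

Lemma cont_sin_hd (h : R) (P : list (kind * R)) (x : R) : continuous (fun u => sin (h + hdg P u)) x.
Proof.
  apply (lip_continuous _ (INR (length P))). apply pos_INR.
  intros u. eapply Rle_trans; [apply sin_lip|].
  replace (h + hdg P u - (h + hdg P x)) with (hdg P u - hdg P x) by ring. apply hd_lip1.
Qed.

Lemma ex_cos_hd (h : R) (P : list (kind * R)) (a b : R) : ex_RInt (fun u => cos (h + hdg P u)) a b.
Proof. apply (ex_RInt_continuous (V:=R_CompleteNormedModule)). intros; apply cont_cos_hd. Qed.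
Lemma ex_sin_hd (h : R) (P : list (kind * R)) (a b : R) : ex_RInt (fun u => sin (h + hdg P u)) a b.
Proof. apply (ex_RInt_continuous (V:=R_CompleteNormedModule)). intros; apply cont_sin_hd. Qed.

Lemma deriv_RInt_gen (f : R -> R) t :
  (forall x, continuous f x) -> derivable_pt_lim (fun s => RInt f 0 s) t (f t).
Proof.
  intros Hc. apply is_derive_Reals.
  apply (is_derive_RInt f (RInt f 0) 0 t).
  - apply filter_forall. intros b0. apply (RInt_correct (V:=R_CompleteNormedModule)). apply (ex_RInt_continuous (V:=R_CompleteNormedModule)). intros; apply Hc.
  - apply Hc.
Qed.

Definition pcx h k d := match k with
  | Sk => d * cos h | Lk => sin (h + d) - sin h | Rk => sin h - sin (h - d) end.
Definition pcy h k d := match k with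
  | Sk => d * sin h | Lk => cos h - cos (h + d) | Rk => cos (h - d) - cos h end.
Fixpoint Dfx h P := match P with nil => 0 | (k, d) :: P' => pcx h k d + Dfx (h + cv k * d) P' end.
Fixpoint Dfy h P := match P with nil => 0 | (k, d) :: P' => pcy h k d + Dfy (h + cv k * d) P' end.

Lemma piece_cos h k d : 0 <= d -> RInt (fun u => cos (h + cv k * u)) 0 d = pcx h k d.
Proof.
  intros Hd. destruct k; simpl.
  - apply is_RInt_unique.
    replace (sin (h + d) - sin h) with (minus (sin (h + d)) (sin (h + 0))) by (rewrite Rplus_0_r; reflexivity).
    apply (is_RInt_derive (fun u => sin (h + u))).
    + intros x _. auto_derive; [exact I|]. try (replace (h + 1 * x) with (h + x) by ring); try (replace (h + -1 * x) with (h + - x) by ring); try (replace (h - x) with (h + - x) by ring); ring.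
    + intros x _. apply (lip_continuous _ 1). lra. intros u. rewrite !Rmult_1_l.
      eapply Rle_trans; [apply cos_lip|]. replace (h + u - (h + x)) with (u - x) by ring. lra.
  - apply is_RInt_unique.
    replace (sin h - sin (h - d)) with (minus (- sin (h - d)) (- sin (h - 0))) by (rewrite Rminus_0_r; unfold minus, plus, opp; simpl; ring).
    apply (is_RInt_derive (fun u => - sin (h - u))).
    + intros x _. auto_derive; [exact I|]. try (replace (h + 1 * x) with (h + x) by ring); try (replace (h + -1 * x) with (h + - x) by ring); try (replace (h - x) with (h + - x) by ring); ring.
    + intros x _. apply (lip_continuous _ 1). lra. intros u.
      eapply Rle_trans; [apply cos_lip|]. replace (h + -1 * u - (h + -1 * x)) with (-(u - x)) by ring.
      rewrite Rabs_Ropp. lra.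
  - rewrite (RInt_ext _ (fun _ => cos h)).
    + rewrite RInt_const. unfold scal; simpl; unfold mult; simpl. ring.
    + intros x _. f_equal. ring.
Qed.

Lemma piece_sin h k d : 0 <= d -> RInt (fun u => sin (h + cv k * u)) 0 d = pcy h k d.
Proof.
  intros Hd. destruct k; simpl.
  - apply is_RInt_unique.
    replace (cos h - cos (h + d)) with (minus (- cos (h + d)) (- cos (h + 0))) by (rewrite Rplus_0_r; unfold minus, plus, opp; simpl; ring).
    apply (is_RInt_derive (fun u => - cos (h + u))).
    + intros x _. auto_derive; [exact I|]. try (replace (h + 1 * x) with (h + x) by ring); try (replace (h + -1 * x) with (h + - x) by ring); try (replace (h - x) with (h + - x) by ring); ring.
    + intros x _. apply (lip_continuous _ 1). lra. intros u. rewrite !Rmult_1_l.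
      eapply Rle_trans; [apply sin_lip|]. replace (h + u - (h + x)) with (u - x) by ring. lra.
  - apply is_RInt_unique.
    replace (cos (h - d) - cos h) with (minus (cos (h - d)) (cos (h - 0))) by (rewrite Rminus_0_r; reflexivity).
    apply (is_RInt_derive (fun u => cos (h - u))).
    + intros x _. auto_derive; [exact I|]. try (replace (h + 1 * x) with (h + x) by ring); try (replace (h + -1 * x) with (h + - x) by ring); try (replace (h - x) with (h + - x) by ring); ring.
    + intros x _. apply (lip_continuous _ 1). lra. intros u.
      eapply Rle_trans; [apply sin_lip|]. replace (h + -1 * u - (h + -1 * x)) with (-(u - x)) by ring.
      rewrite Rabs_Ropp. lra.
  - rewrite (RInt_ext _ (fun _ => sin h)).
    + rewrite RInt_const. unfold scal; simpl; unfold mult; simpl. ring.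
    + intros x _. f_equal. ring.
Qed.


Lemma RInt_shift (f : R -> R) d T : ex_RInt f d (d + T) ->
  RInt f d (d + T) = RInt (fun v => f (v + d)) 0 T.
Proof.
  intros Hex.
  assert (E := RInt_comp_lin f 1 d 0 T).
  replace (1 * 0 + d) with d in E by ring.
  replace (1 * T + d) with (d + T) in E by ring.
  rewrite <- (E Hex). apply RInt_ext. intros x _.
  unfold scal; simpl; unfold mult; simpl. rewrite Rmult_1_l. f_equal. ring.
Qed.

Lemma disp_x h P : nneg P -> RInt (fun u => cos (h + hdg P u)) 0 (tot P) = Dfx h P.
Proof.
  revert h; induction P as [|[k d] P IH]; intros h HP.
  - simpl. apply (RInt_point (V:=R_CompleteNormedModule)).
  - inversion HP as [|? ? Hd HP']; subst; simpl in Hd.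
    pose proof (tot_nonneg P HP').
    change (tot ((k, d) :: P)) with (d + tot P).
    rewrite <- (RInt_Chasles _ 0 d (d + tot P)) by apply ex_cos_hd.
    change (Dfx h ((k, d) :: P)) with (pcx h k d + Dfx (h + cv k * d) P).
    change plus with Rplus. f_equal.
    + rewrite <- piece_cos by exact Hd. apply RInt_ext.
      intros x Hx. rewrite Rmin_left in Hx by lra. rewrite Rmax_right in Hx by lra.
      rewrite hd_cons_in by (auto; lra). reflexivity.
    + rewrite <- IH by exact HP'.
      rewrite (RInt_ext _ (fun u => cos (h + cv k * d + hdg P (u - d)))).
      * rewrite RInt_shift. apply RInt_ext. intros x _. f_equal. f_equal. f_equal. ring.
        apply (ex_RInt_continuous (V:=R_CompleteNormedModule)). intros z _.
        apply (lip_continuous _ (INR (length P))). apply pos_INR. intros u.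
        eapply Rle_trans; [apply cos_lip|].
        replace (h + cv k * d + hdg P (u - d) - (h + cv k * d + hdg P (z - d))) with
          (hdg P (u - d) - hdg P (z - d)) by ring.
        eapply Rle_trans; [apply hd_lip1|]. right. f_equal. f_equal. ring.
      * intros x Hx. rewrite Rmin_left in Hx by lra. rewrite Rmax_right in Hx by lra.
        rewrite hd_cons_ge by lra. f_equal. ring.
Qed.

Lemma disp_y h P : nneg P -> RInt (fun u => sin (h + hdg P u)) 0 (tot P) = Dfy h P.
Proof.
  revert h; induction P as [|[k d] P IH]; intros h HP.
  - simpl. apply (RInt_point (V:=R_CompleteNormedModule)).
  - inversion HP as [|? ? Hd HP']; subst; simpl in Hd.
    pose proof (tot_nonneg P HP').
    change (tot ((k, d) :: P)) with (d + tot P).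
    rewrite <- (RInt_Chasles _ 0 d (d + tot P)) by apply ex_sin_hd.
    change (Dfy h ((k, d) :: P)) with (pcy h k d + Dfy (h + cv k * d) P).
    change plus with Rplus. f_equal.
    + rewrite <- piece_sin by exact Hd. apply RInt_ext.
      intros x Hx. rewrite Rmin_left in Hx by lra. rewrite Rmax_right in Hx by lra.
      rewrite hd_cons_in by (auto; lra). reflexivity.
    + rewrite <- IH by exact HP'.
      rewrite (RInt_ext _ (fun u => sin (h + cv k * d + hdg P (u - d)))).
      * rewrite RInt_shift. apply RInt_ext. intros x _. f_equal. f_equal. f_equal. ring.
        apply (ex_RInt_continuous (V:=R_CompleteNormedModule)). intros z _.
        apply (lip_continuous _ (INR (length P))). apply pos_INR. intros u.
        eapply Rle_trans; [apply sin_lip|].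
        replace (h + cv k * d + hdg P (u - d) - (h + cv k * d + hdg P (z - d))) with
          (hdg P (u - d) - hdg P (z - d)) by ring.
        eapply Rle_trans; [apply hd_lip1|]. right. f_equal. f_equal. ring.
      * intros x Hx. rewrite Rmin_left in Hx by lra. rewrite Rmax_right in Hx by lra.
        rewrite hd_cons_ge by lra. f_equal. ring.
Qed.


Definition pos_b (kd : kind * R) : bool := if Rlt_dec 0 (snd kd) then true else false.
Definition filt (P : list (kind * R)) := filter pos_b P.

Lemma filt_hd P t : nneg P -> hdg (filt P) t = hdg P t.
Proof.
  revert t; induction P as [|[k d] P IH]; intros t HP; simpl; auto.
  inversion HP as [|? ? Hd HP']; subst; simpl in Hd.
  unfold pos_b; simpl. destruct Rlt_dec.
  - simpl. rewrite IH by auto. reflexivity.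
  - assert (d = 0) by lra. subst. rewrite IH by auto.
    replace (t - 0) with t by ring. unfold clamp, Rmin, Rmax. repeat destruct Rle_dec; lra.
Qed.

Lemma filt_tot P : nneg P -> tot (filt P) = tot P.
Proof.
  induction P as [|[k d] P IH]; intros HP; simpl; auto.
  inversion HP as [|? ? Hd HP']; subst; simpl in Hd.
  unfold pos_b; simpl. destruct Rlt_dec; simpl; rewrite IH by auto; lra.
Qed.

Lemma filt_pos P : List.Forall (fun kd => 0 < snd kd) (filt P).
Proof.
  induction P as [|[k d] P IH]; simpl; auto.
  unfold pos_b; simpl. destruct Rlt_dec; auto.
Qed.

Lemma pos_nneg F : List.Forall (fun kd => 0 < snd kd) F -> nneg F.
Proof. induction 1; constructor; auto. lra. Qed.

Definition tau (F : list (kind * R)) (i : nat) := tot (firstn i F).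

Lemma tau_nneg F i : nneg F -> 0 <= tau F i.
Proof.
  unfold tau. revert i; induction F as [|[k d] F IH]; intros [|i] HF; simpl; try lra.
  inversion HF; subst; simpl in *. specialize (IH i H2). lra.
Qed.

Lemma tau_S F i : (i < length F)%nat -> tau F (S i) = tau F i + snd (nth i F (Sk, 0)).
Proof.
  unfold tau. revert i; induction F as [|[k d] F IH]; intros [|i] Hi; simpl in *; try lia.
  - ring.
  - rewrite IH by lia. ring.
Qed.

Lemma piece_affine F i t : nneg F -> (i < length F)%nat -> tau F i <= t <= tau F (S i) ->
  hdg F t = hdg F (tau F i) + cv (fst (nth i F (Sk, 0))) * (t - tau F i).
Proof.
  revert i t; induction F as [|[k d] F IH]; intros [|i] t HF Hi Ht; simpl in Hi; try lia.
  - inversion HF; subst. cbn [snd] in *.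
    unfold tau in *; cbn [firstn tot nth fst] in *.
    rewrite hd_cons_in by (auto; lra). rewrite hd_cons_in by (auto; lra). ring.
  - inversion HF as [|? ? Hd HF']; subst; simpl in Hd.
    assert (Hi' : (i < length F)%nat) by lia.
    pose proof (tau_nneg F i HF').
    unfold tau in *. cbn [firstn tot nth fst] in *.
    rewrite (hd_cons_ge k d F t) by lra.
    rewrite (hd_cons_ge k d F (d + tot (firstn i F))) by lra.
    replace (d + tot (firstn i F) - d) with (tot (firstn i F)) by ring.
    rewrite (IH i (t - d)) by (auto; unfold tau; cbn [firstn tot] in *; lra).
    unfold tau. ring.
Qed.

Definition gP (P : list (kind * R)) (t : R) : vec :=
  (RInt (fun u => cos (hdg P u)) 0 t, RInt (fun u => sin (hdg P u)) 0 t).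
Definition dgP (P : list (kind * R)) (t : R) : vec := (cos (hdg P t), sin (hdg P t)).

Lemma cont_cos0 P x : continuous (fun u => cos (hdg P u)) x.
Proof.
  apply (lip_continuous _ (INR (length P))). apply pos_INR.
  intros u. eapply Rle_trans; [apply cos_lip|]. apply hd_lip1.
Qed.
Lemma cont_sin0 P x : continuous (fun u => sin (hdg P u)) x.
Proof.
  apply (lip_continuous _ (INR (length P))). apply pos_INR.
  intros u. eapply Rle_trans; [apply sin_lip|]. apply hd_lip1.
Qed.

Lemma norm_sc c x : vnorm (- c * sin x, c * cos x) = Rabs c.
Proof.
  unfold vnorm; simpl. rewrite <- sqrt_Rsqr_abs. f_equal.
  pose proof (sin2_cos2 x). unfold Rsqr in *. nra.
Qed.

Lemma bcp_of P : nneg P -> 0 < tot P -> turn P = 0 ->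
  bcp (0, 0) (1, 0) (Dfx 0 P, Dfy 0 P) (1, 0) (tot P) (gP P) (dgP P).
Proof.
  intros HP Htot Hturn.
  set (n := INR (length P)). assert (Hn : 0 <= n) by apply pos_INR.
  unfold bcp. split; [exact Htot|].
  split; [unfold unit_vec; simpl; ring|].
  split; [unfold unit_vec; simpl; ring|].
  split.
  { intros t _. unfold gP, dgP. apply deriv_of_lim; [apply (deriv_RInt_gen (fun u => cos (hdg P u)))|apply (deriv_RInt_gen (fun u => sin (hdg P u)))]; intros; [apply cont_cos0|apply cont_sin0]. }
  split.
  { intros t _. apply (lip_cont_within _ _ _ (2 * n)). lra.
    intros u. eapply Rle_trans; [apply vdist_le|]. unfold dgP; simpl.
    pose proof (cos_lip (hdg P u) (hdg P t)). pose proof (sin_lip (hdg P u) (hdg P t)).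
    pose proof (hd_lip1 P u t). fold n in H1. lra. }
  split.
  { intros t _. unfold dgP, vnorm. cbn [fst snd]. rewrite <- sqrt_1. f_equal.
    pose proof (sin2_cos2 (hdg P t)). unfold Rsqr in H. nra. }
  split.
  { unfold gP. f_equal; apply (RInt_point (V:=R_CompleteNormedModule)). }
  split.
  { unfold dgP. rewrite hd_le0 by (auto; lra). rewrite cos_0, sin_0. reflexivity. }
  split.
  { unfold gP. f_equal.
    - rewrite <- disp_x by auto. apply RInt_ext. intros; f_equal; ring.
    - rewrite <- disp_y by auto. apply RInt_ext. intros; f_equal; ring. }
  split.
  { unfold dgP. rewrite hd_ge_tot by (auto; lra). rewrite Hturn, cos_0, sin_0. reflexivity. }
  set (F := filt P).
  assert (HF : nneg F) by (apply pos_nneg, filt_pos).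
  assert (HFp := filt_pos P). fold F in HFp.
  exists (length F), (tau F),
    (fun i t => (- cv (fst (nth i F (Sk, 0))) * sin (hdg P t), cv (fst (nth i F (Sk, 0))) * cos (hdg P t))).
  split; [reflexivity|].
  split; [unfold tau; rewrite firstn_all; apply filt_tot; auto|].
  split.
  { intros i Hi. rewrite tau_S by auto.
    assert (0 < snd (nth i F (Sk, 0))).
    { rewrite List.Forall_forall in HFp. apply HFp. apply nth_In. auto. }
    lra. }
  intros i Hi t Ht.
  set (c := cv (fst (nth i F (Sk, 0)))).
  set (A := hdg F (tau F i)).
  assert (Haff : forall u, Icc (tau F i) (tau F (S i)) u -> hdg P u = A + c * (u - tau F i)).
  { intros u Hu. rewrite <- filt_hd by auto. apply piece_affine; auto. }
  split; [|split].
  - apply (deriv_within_ext _ _ (fun u => (cos (A + c * (u - tau F i)), sin (A + c * (u - tau F i))))).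
    + intros u Hu. unfold dgP. rewrite Haff by auto. reflexivity.
    + exact Ht.
    + rewrite (Haff t Ht). apply deriv_of_lim; apply is_derive_Reals; auto_derive; auto; replace (t + - tau F i) with (t - tau F i) by ring; ring.
  - apply (lip_cont_within _ _ _ (2 * n)). lra.
    intros u. eapply Rle_trans; [apply vdist_le|]. simpl.
    pose proof (cos_lip (hdg P u) (hdg P t)). pose proof (sin_lip (hdg P u) (hdg P t)).
    pose proof (hd_lip1 P u t). fold n in H1.
    pose proof (cv_abs (fst (nth i F (Sk, 0)))). fold c in H2.
    replace (- c * sin (hdg P u) - - c * sin (hdg P t)) with (- c * (sin (hdg P u) - sin (hdg P t))) by ring.
    replace (c * cos (hdg P u) - c * cos (hdg P t)) with (c * (cos (hdg P u) - cos (hdg P t))) by ring.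
    rewrite !Rabs_mult, Rabs_Ropp.
    pose proof (Rabs_pos c). pose proof (Rabs_pos (sin (hdg P u) - sin (hdg P t))).
    pose proof (Rabs_pos (cos (hdg P u) - cos (hdg P t))).
    nra.
  - rewrite norm_sc. apply cv_abs.
Qed.


Definition sg (q : R) := 2 * (1 + cos q - 2 * cos q ^ 2) / (1 + sin q).
Definition dl (q : R) := 2 * cos q * (1 + 2 * sin q) / (1 + sin q).

Definition famq (a b : R) : list (kind * R) :=
  (Rk, PI/2 - a + 2*b) :: (Sk, sg a + sg b - 1) :: (Lk, a + b - PI/2) :: (Sk, dl a) ::
  (Lk, 2*PI - a - b) :: (Sk, dl b) :: (Lk, a + b - PI/2) :: (Sk, sg a + sg b - 1) ::
  (Rk, PI/2 - b + 2*a) :: nil.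

Lemma stepR h d h' P : h' = h - d -> Dfx h ((Rk, d) :: P) = sin h - sin h' + Dfx h' P.
Proof. intros ->. simpl. replace (h + -1 * d) with (h - d) by ring. reflexivity. Qed.
Lemma stepL h d h' P : h' = h + d -> Dfx h ((Lk, d) :: P) = sin h' - sin h + Dfx h' P.
Proof. intros ->. simpl. replace (h + 1 * d) with (h + d) by ring. reflexivity. Qed.
Lemma stepS h d P : Dfx h ((Sk, d) :: P) = d * cos h + Dfx h P.
Proof. simpl. replace (h + 0 * d) with h by ring. reflexivity. Qed.
Lemma stepRy h d h' P : h' = h - d -> Dfy h ((Rk, d) :: P) = cos h' - cos h + Dfy h' P.
Proof. intros ->. simpl. replace (h + -1 * d) with (h - d) by ring. reflexivity. Qed.
Lemma stepLy h d h' P : h' = h + d -> Dfy h ((Lk, d) :: P) = cos h - cos h' + Dfy h' P.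
Proof. intros ->. simpl. replace (h + 1 * d) with (h + d) by ring. reflexivity. Qed.
Lemma stepSy h d P : Dfy h ((Sk, d) :: P) = d * sin h + Dfy h P.
Proof. simpl. replace (h + 0 * d) with h by ring. reflexivity. Qed.

Lemma sg_PI2 : sg (PI/2) = 1.
Proof. unfold sg. rewrite cos_PI2, sin_PI2. field. Qed.
Lemma dl_PI2 : dl (PI/2) = 0.
Proof. unfold dl. rewrite cos_PI2, sin_PI2. field. Qed.

Lemma c3 x : cos (x - 3 * (PI/2)) = - sin x.
Proof. rewrite cos_minus, cos_3PI2, sin_3PI2. ring. Qed.
Lemma s3 x : sin (x - 3 * (PI/2)) = cos x.
Proof. rewrite sin_minus, cos_3PI2, sin_3PI2. ring. Qed.
Lemma c3' x : cos (3 * (PI/2) - x) = - sin x.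
Proof. rewrite cos_minus, cos_3PI2, sin_3PI2. ring. Qed.
Lemma s3' x : sin (3 * (PI/2) - x) = - cos x.
Proof. rewrite sin_minus, cos_3PI2, sin_3PI2. ring. Qed.

Lemma end1 q : 0 <= q <= PI/2 -> Dfx 0 (famq q (PI/2)) = -2 /\ Dfy 0 (famq q (PI/2)) = 0.
Proof.
  intros Hq. unfold famq. rewrite sg_PI2, dl_PI2.
  assert (Hs : 0 <= sin q) by (apply sin_ge_0; lra).
  assert (Hs1 : 1 + sin q <> 0) by lra.
  split.
  - rewrite (stepR _ _ (q - 3*(PI/2))) by lra. rewrite stepS.
    rewrite (stepL _ _ (2*q - 3*(PI/2))) by lra. rewrite stepS.
    rewrite (stepL _ _ q) by lra. rewrite stepS.
    rewrite (stepL _ _ (2*q)) by lra. rewrite stepS.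
    rewrite (stepR _ _ 0) by lra. simpl Dfx.
    rewrite c3, s3, c3, s3, sin_0, sin_2a, cos_2a_cos.
    unfold sg, dl. pose proof (sin2_cos2 q). unfold Rsqr in H.
    assert (Hs2 : sin q ^ 2 = 1 - cos q ^ 2) by nra.
    field_simplify_eq; [|auto]. rewrite ?Hs2. ring.
  - rewrite (stepRy _ _ (q - 3*(PI/2))) by lra. rewrite stepSy.
    rewrite (stepLy _ _ (2*q - 3*(PI/2))) by lra. rewrite stepSy.
    rewrite (stepLy _ _ q) by lra. rewrite stepSy.
    rewrite (stepLy _ _ (2*q)) by lra. rewrite stepSy.
    rewrite (stepRy _ _ 0) by lra. simpl Dfy.
    rewrite c3, s3, c3, s3, cos_0, sin_2a, cos_2a_cos.
    unfold sg, dl. pose proof (sin2_cos2 q). unfold Rsqr in H.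
    assert (Hs2 : sin q ^ 2 = 1 - cos q ^ 2) by nra.
    field_simplify_eq; [|auto]. rewrite ?Hs2. ring.
Qed.

Lemma end2 q : 0 <= q <= PI/2 -> Dfx 0 (famq (PI/2) q) = -2 /\ Dfy 0 (famq (PI/2) q) = 0.
Proof.
  intros Hq. unfold famq. rewrite sg_PI2, dl_PI2.
  assert (Hs : 0 <= sin q) by (apply sin_ge_0; lra).
  assert (Hs1 : 1 + sin q <> 0) by lra.
  split.
  - rewrite (stepR _ _ (-(2*q))) by lra. rewrite stepS.
    rewrite (stepL _ _ (-q)) by lra. rewrite stepS.
    rewrite (stepL _ _ (3*(PI/2) - 2*q)) by lra. rewrite stepS.
    rewrite (stepL _ _ (3*(PI/2) - q)) by lra. rewrite stepS.
    rewrite (stepR _ _ 0) by lra. simpl Dfx.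
    rewrite c3', s3', c3', s3', cos_neg, sin_neg, cos_neg, sin_neg, sin_0, sin_2a, cos_2a_cos.
    unfold sg, dl. pose proof (sin2_cos2 q). unfold Rsqr in H.
    assert (Hs2 : sin q ^ 2 = 1 - cos q ^ 2) by nra.
    field_simplify_eq; [|auto]. rewrite ?Hs2. ring.
  - rewrite (stepRy _ _ (-(2*q))) by lra. rewrite stepSy.
    rewrite (stepLy _ _ (-q)) by lra. rewrite stepSy.
    rewrite (stepLy _ _ (3*(PI/2) - 2*q)) by lra. rewrite stepSy.
    rewrite (stepLy _ _ (3*(PI/2) - q)) by lra. rewrite stepSy.
    rewrite (stepRy _ _ 0) by lra. simpl Dfy.
    rewrite c3', s3', c3', s3', cos_neg, sin_neg, cos_neg, sin_neg, cos_0, sin_2a, cos_2a_cos.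
    unfold sg, dl. pose proof (sin2_cos2 q). unfold Rsqr in H.
    assert (Hs2 : sin q ^ 2 = 1 - cos q ^ 2) by nra.
    field_simplify_eq; [|auto]. rewrite ?Hs2. ring.
Qed.


Definition q1 p := PI * Rmin p (1/2).
Definition q2 p := PI * Rmin (1 - p) (1/2).
Definition fam p := famq (q1 p) (q2 p).

Lemma fam_cases p : 0 <= p <= 1 ->
  (0 <= q1 p <= PI/2 /\ q2 p = PI/2 /\ q1 p = PI * p) \/ (q1 p = PI/2 /\ 0 <= q2 p <= PI/2 /\ q2 p = PI * (1 - p)).
Proof.
  intros Hp. pose proof PI_RGT_0. unfold q1, q2.
  destruct (Rle_dec p (1/2)).
  - left. rewrite Rmin_left by lra. rewrite Rmin_right by lra. repeat split; nra.
  - right. rewrite Rmin_right by lra. rewrite Rmin_left by lra. repeat split; nra.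
Qed.

Lemma sg_nneg q : 0 <= q <= PI/2 -> 0 <= sg q.
Proof.
  intros Hq. unfold sg.
  assert (0 <= sin q) by (apply sin_ge_0; lra).
  assert (0 <= cos q) by (apply cos_ge_0; lra).
  pose proof (COS_bound q).
  apply Rmult_le_pos; [nra|]. left. apply Rinv_0_lt_compat. lra.
Qed.

Lemma dl_nneg q : 0 <= q <= PI/2 -> 0 <= dl q.
Proof.
  intros Hq. unfold dl.
  assert (0 <= sin q) by (apply sin_ge_0; lra).
  assert (0 <= cos q) by (apply cos_ge_0; lra).
  apply Rmult_le_pos; [nra|]. left. apply Rinv_0_lt_compat. lra.
Qed.

Lemma fam_props p : 0 <= p <= 1 ->
  nneg (fam p) /\ 0 < tot (fam p) /\ turn (fam p) = 0 /\ Dfx 0 (fam p) = -2 /\ Dfy 0 (fam p) = 0.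
Proof.
  intros Hp. pose proof PI_RGT_0. unfold fam.
  destruct (fam_cases p Hp) as [[Ha [Hb _]] | [Ha [Hb _]]].
  - rewrite Hb. pose proof (sg_nneg _ Ha). pose proof (dl_nneg _ Ha).
    pose proof (end1 _ Ha).
    split; [|split; [|split]].
    + unfold nneg, famq. rewrite sg_PI2, dl_PI2.
      repeat apply List.Forall_cons; try apply List.Forall_nil; simpl; lra.
    + unfold famq. rewrite sg_PI2, dl_PI2. simpl. lra.
    + unfold famq. simpl. lra.
    + exact H2.
  - rewrite Ha. pose proof (sg_nneg _ Hb). pose proof (dl_nneg _ Hb).
    pose proof (end2 _ Hb).
    split; [|split; [|split]].
    + unfold nneg, famq. rewrite sg_PI2, dl_PI2.
      repeat apply List.Forall_cons; try apply List.Forall_nil; simpl; lra.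
    + unfold famq. rewrite sg_PI2, dl_PI2. simpl. lra.
    + unfold famq. simpl. lra.
    + exact H2.
Qed.


Lemma tot_diff P Q : map fst P = map fst Q -> Rabs (tot P - tot Q) <= pdist P Q.
Proof.
  revert Q; induction P as [|[k d] P IH]; intros [|[k' d'] Q] H; cbn [tot pdist map] in *;
    try discriminate.
  - rewrite Rminus_0_r, Rabs_R0; lra.
  - injection H as _ H. specialize (IH Q H).
    replace (d + tot P - (d' + tot Q)) with ((d - d') + (tot P - tot Q)) by ring.
    eapply Rle_trans; [apply Rabs_triang|]. lra.
Qed.


Lemma phi_cont (phi : R -> R) (Hlip : forall a b, Rabs (phi a - phi b) <= Rabs (a - b)) (Hbd : forall a, Rabs (phi a) <= 1) (P : list (kind * R)) (x : R) : continuous (fun u => phi (hdg P u)) x.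
Proof.
  apply (lip_continuous _ (INR (length P))). apply pos_INR.
  intros u. eapply Rle_trans; [apply Hlip|]. apply hd_lip1.
Qed.

Lemma phi_ex (phi : R -> R) (Hlip : forall a b, Rabs (phi a - phi b) <= Rabs (a - b)) (Hbd : forall a, Rabs (phi a) <= 1) (P : list (kind * R)) (a b : R) : ex_RInt (fun u => phi (hdg P u)) a b.
Proof. apply (ex_RInt_continuous (V:=R_CompleteNormedModule)). intros; apply (phi_cont phi Hlip Hbd). Qed.

Lemma RInt_bd1 (phi : R -> R) (Hlip : forall a b, Rabs (phi a - phi b) <= Rabs (a - b)) (Hbd : forall a, Rabs (phi a) <= 1) P a b : Rabs (RInt (fun u => phi (hdg P u)) a b) <= Rabs (b - a).
Proof.
  destruct (Rle_dec a b).
  - eapply Rle_trans; [apply (abs_RInt_le_const _ a b 1); [lra | apply (phi_ex phi Hlip Hbd) | intros; apply Hbd] |].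
    rewrite Rabs_right by lra. lra.
  - rewrite <- (opp_RInt_swap _ b a) by apply (phi_ex phi Hlip Hbd).
    change (opp (RInt (fun u => phi (hdg P u)) b a)) with (- RInt (fun u => phi (hdg P u)) b a).
    rewrite Rabs_Ropp.
    eapply Rle_trans; [apply (abs_RInt_le_const _ b a 1); [lra | apply (phi_ex phi Hlip Hbd) | intros; apply Hbd] |].
    rewrite Rabs_left by lra. lra.
Qed.

Lemma comp_est (phi : R -> R) (Hlip : forall a b, Rabs (phi a - phi b) <= Rabs (a - b)) (Hbd : forall a, Rabs (phi a) <= 1) P Q u v : map fst P = map fst Q -> 0 <= v ->
  Rabs (RInt (fun w => phi (hdg P w)) 0 u - RInt (fun w => phi (hdg Q w)) 0 v)
  <= Rabs (u - v) + v * (INR (length P) * pdist P Q).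
Proof.
  intros HPQ Hv.
  rewrite <- (RInt_Chasles (fun w => phi (hdg P w)) 0 v u) by apply (phi_ex phi Hlip Hbd).
  change plus with Rplus.
  replace (RInt (fun w : R => phi (hdg P w)) 0 v + RInt (fun w : R => phi (hdg P w)) v u -
           RInt (fun w : R => phi (hdg Q w)) 0 v)
    with (RInt (fun w : R => phi (hdg P w)) v u +
          (RInt (fun w : R => phi (hdg P w)) 0 v - RInt (fun w : R => phi (hdg Q w)) 0 v)) by ring.
  eapply Rle_trans; [apply Rabs_triang|].
  apply Rplus_le_compat. apply (RInt_bd1 phi Hlip Hbd).
  assert (E : RInt (fun w => phi (hdg P w)) 0 v - RInt (fun w => phi (hdg Q w)) 0 v =
              RInt (fun w => phi (hdg P w) - phi (hdg Q w)) 0 v).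
  { rewrite (RInt_minus (V:=R_CompleteNormedModule)) by apply (phi_ex phi Hlip Hbd). reflexivity. }
  rewrite E.
  eapply Rle_trans; [apply (abs_RInt_le_const _ 0 v (INR (length P) * pdist P Q)); [lra| |] |].
  - apply (ex_RInt_minus (V:=R_CompleteNormedModule)); apply (phi_ex phi Hlip Hbd).
  - intros w _. eapply Rle_trans; [apply Hlip|].
    eapply Rle_trans; [apply hd_lip; exact HPQ|]. rewrite Rminus_diag, Rabs_R0, Rplus_0_l. apply Rle_refl.
  - lra.
Qed.

Lemma deriv_est (phi : R -> R) (Hlip : forall a b, Rabs (phi a - phi b) <= Rabs (a - b)) (Hbd : forall a, Rabs (phi a) <= 1) P Q u v : map fst P = map fst Q -> 0 <= tot Q ->
  Rabs (tot P * phi (hdg P u) - tot Q * phi (hdg Q v))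
  <= pdist P Q + tot Q * (INR (length P) * (Rabs (u - v) + pdist P Q)).
Proof.
  intros HPQ HQ.
  replace (tot P * phi (hdg P u) - tot Q * phi (hdg Q v)) with
    ((tot P - tot Q) * phi (hdg P u) + tot Q * (phi (hdg P u) - phi (hdg Q v))) by ring.
  eapply Rle_trans; [apply Rabs_triang|]. rewrite !Rabs_mult.
  apply Rplus_le_compat.
  - pose proof (tot_diff P Q HPQ). pose proof (Hbd (hdg P u)). pose proof (Rabs_pos (tot P - tot Q)).
    pose proof (Rabs_pos (phi (hdg P u))). nra.
  - rewrite (Rabs_right (tot Q)) by lra. apply Rmult_le_compat_l; auto.
    eapply Rle_trans; [apply Hlip|]. apply hd_lip; auto.
Qed.

Lemma cos_bd a : Rabs (cos a) <= 1.
Proof. pose proof (COS_bound a). unfold Rabs; destruct Rcase_abs; lra. Qed.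
Lemma sin_bd a : Rabs (sin a) <= 1.
Proof. pose proof (SIN_bound a). unfold Rabs; destruct Rcase_abs; lra. Qed.

Lemma homot_est P Q t : map fst P = map fst Q -> nneg P -> nneg Q -> 0 <= t <= 1 ->
  vdist (gP P (tot P * t)) (gP Q (tot Q * t)) <= 2 * (1 + INR (length P) * tot Q) * pdist P Q /\
  vdist (vscale (tot P) (dgP P (tot P * t))) (vscale (tot Q) (dgP Q (tot Q * t)))
    <= 2 * (1 + 2 * INR (length P) * tot Q) * pdist P Q.
Proof.
  intros HPQ HP HQ Ht.
  pose proof (tot_nonneg P HP). pose proof (tot_nonneg Q HQ).
  pose proof (tot_diff P Q HPQ). pose proof (pdist_pos P Q).
  set (n := INR (length P)). assert (0 <= n) by apply pos_INR.
  assert (Huv : Rabs (tot P * t - tot Q * t) <= pdist P Q).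
  { replace (tot P * t - tot Q * t) with ((tot P - tot Q) * t) by ring.
    rewrite Rabs_mult, (Rabs_right t) by lra.
    pose proof (Rabs_pos (tot P - tot Q)). nra. }
  assert (Hv : 0 <= tot Q * t) by nra.
  assert (Hv1 : tot Q * t <= tot Q) by nra.
  split.
  - eapply Rle_trans; [apply vdist_le|]. unfold gP; cbn [fst snd].
    pose proof (comp_est cos cos_lip cos_bd P Q (tot P * t) (tot Q * t) HPQ Hv) as E1.
    pose proof (comp_est sin sin_lip sin_bd P Q (tot P * t) (tot Q * t) HPQ Hv) as E2.
    fold n in E1, E2.
    assert (tot Q * t * (n * pdist P Q) <= tot Q * (n * pdist P Q)).
    { apply Rmult_le_compat_r; nra. }
    lra.
  - eapply Rle_trans; [apply vdist_le|]. unfold dgP, vscale; cbn [fst snd].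
    pose proof (deriv_est cos cos_lip cos_bd P Q (tot P * t) (tot Q * t) HPQ ltac:(lra)) as E1.
    pose proof (deriv_est sin sin_lip sin_bd P Q (tot P * t) (tot Q * t) HPQ ltac:(lra)) as E2.
    fold n in E1, E2.
    assert (tot Q * (n * (Rabs (tot P * t - tot Q * t) + pdist P Q)) <= tot Q * (n * (2 * pdist P Q))).
    { apply Rmult_le_compat_l; auto. apply Rmult_le_compat_l; auto. lra. }
    nra.
Qed.


Definition small (f : R -> R) (x : R) :=
  forall e, 0 < e -> exists d, 0 < d /\ forall p, Rabs (p - x) < d -> Rabs (f p) < e.

Lemma small_plus f g x : small f x -> small g x -> small (fun p => f p + g p) x.
Proof.
  intros Hf Hg e He. destruct (Hf (e/2) ltac:(lra)) as [d1 [Hd1 H1]].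
  destruct (Hg (e/2) ltac:(lra)) as [d2 [Hd2 H2]].
  exists (Rmin d1 d2). split. apply Rmin_pos; auto.
  intros p Hp. pose proof (Rmin_l d1 d2); pose proof (Rmin_r d1 d2).
  eapply Rle_lt_trans; [apply Rabs_triang|].
  specialize (H1 p ltac:(lra)); specialize (H2 p ltac:(lra)). lra.
Qed.

Lemma small_abs f x : small f x -> small (fun p => Rabs (f p)) x.
Proof. intros Hf e He. destruct (Hf e He) as [d [Hd H]]. exists d; split; auto.
  intros p Hp. rewrite Rabs_Rabsolu. auto. Qed.

Lemma small_ext g f x : (forall p, g p = f p) -> small g x -> small f x.
Proof. intros E Hg e He. destruct (Hg e He) as [d [Hd H]]. exists d; split; auto.
  intros p Hp. rewrite <- E. auto. Qed.

Lemma small_lin c f x : small f x -> small (fun p => c * f p) x.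
Proof.
  intros Hf e He. destruct (Hf (e / (Rabs c + 1))) as [d [Hd H]].
  { apply Rdiv_lt_0_compat; auto. pose proof (Rabs_pos c); lra. }
  exists d; split; auto. intros p Hp. specialize (H p Hp).
  rewrite Rabs_mult. pose proof (Rabs_pos c). pose proof (Rabs_pos (f p)).
  apply Rle_lt_trans with ((Rabs c + 1) * Rabs (f p)). nra.
  apply Rmult_lt_reg_r with (/ (Rabs c + 1)). apply Rinv_0_lt_compat; lra.
  replace ((Rabs c + 1) * Rabs (f p) * / (Rabs c + 1)) with (Rabs (f p)) by (field; lra).
  exact H.
Qed.

Lemma small_zero x : small (fun _ => 0) x.
Proof. intros e He. exists 1. split. lra. intros. rewrite Rabs_R0. auto. Qed.

Lemma small_comp g f x : continuity_pt g (f x) -> small (fun p => f p - f x) x ->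
  small (fun p => g (f p) - g (f x)) x.
Proof.
  intros Hg Hf e He. destruct (Hg e He) as [a [Ha H]].
  destruct (Hf a Ha) as [d [Hd H']]. exists d; split; auto.
  intros p Hp. destruct (Req_dec (f p) (f x)) as [E|E].
  - rewrite E, Rminus_diag, Rabs_R0. auto.
  - assert (Hd' : D_x no_cond (f x) (f p) /\ dist R_met (f p) (f x) < a).
    { split. split. exact I. auto. simpl. unfold R_dist. apply H'; auto. }
    specialize (H (f p) Hd'). simpl in H. unfold R_dist in H. exact H.
Qed.

Lemma small_q1 x : small (fun p => q1 p - q1 x) x.
Proof.
  apply (small_ext (fun p => PI * (Rmin p (1/2) - Rmin x (1/2)))).
  { intros; unfold q1; ring. }
  apply small_lin. intros e He. exists e. split; auto. intros p Hp.
  eapply Rle_lt_trans; [|exact Hp]. unfold Rmin. repeat destruct Rle_dec; unfold Rabs; repeat destruct Rcase_abs; lra.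
Qed.

Lemma small_q2 x : small (fun p => q2 p - q2 x) x.
Proof.
  apply (small_ext (fun p => PI * (Rmin (1 - p) (1/2) - Rmin (1 - x) (1/2)))).
  { intros; unfold q2; ring. }
  apply small_lin. intros e He. exists e. split; auto. intros p Hp.
  eapply Rle_lt_trans; [|exact Hp]. unfold Rmin. repeat destruct Rle_dec; unfold Rabs; repeat destruct Rcase_abs; lra.
Qed.

Lemma sg_cont q : 0 <= q <= PI -> continuity_pt sg q.
Proof. intros Hq. assert (0 <= sin q) by (apply sin_ge_0; lra). unfold sg. reg. lra. Qed.
Lemma dl_cont q : 0 <= q <= PI -> continuity_pt dl q.
Proof. intros Hq. assert (0 <= sin q) by (apply sin_ge_0; lra). unfold dl. reg. lra. Qed.

Lemma q_range x : 0 <= x <= 1 -> 0 <= q1 x <= PI /\ 0 <= q2 x <= PI.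
Proof. intros Hx. destruct (fam_cases x Hx) as [[? [? ?]]|[? [? ?]]]; pose proof PI_RGT_0; split; lra. Qed.

Lemma small_pdist x : 0 <= x <= 1 -> small (fun p => pdist (fam p) (fam x)) x.
Proof.
  intros Hx. destruct (q_range x Hx) as [Hq1 Hq2].
  pose proof (small_q1 x) as S1. pose proof (small_q2 x) as S2.
  pose proof (small_comp sg q1 x (sg_cont _ Hq1) S1) as G1.
  pose proof (small_comp sg q2 x (sg_cont _ Hq2) S2) as G2.
  pose proof (small_comp dl q1 x (dl_cont _ Hq1) S1) as L1.
  pose proof (small_comp dl q2 x (dl_cont _ Hq2) S2) as L2.
  unfold fam, famq. cbn [pdist].
  repeat (apply small_plus; [apply small_abs|]); try apply small_zero.
  - apply (small_ext (fun p => -1 * (q1 p - q1 x) + 2 * (q2 p - q2 x))). intros; ring.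
    apply small_plus; apply small_lin; auto.
  - apply (small_ext (fun p => (sg (q1 p) - sg (q1 x)) + (sg (q2 p) - sg (q2 x)))). intros; ring.
    apply small_plus; auto.
  - apply (small_ext (fun p => (q1 p - q1 x) + (q2 p - q2 x))). intros; ring.
    apply small_plus; auto.
  - exact L1.
  - apply (small_ext (fun p => -1 * (q1 p - q1 x) + -1 * (q2 p - q2 x))). intros; ring.
    apply small_plus; apply small_lin; auto.
  - exact L2.
  - apply (small_ext (fun p => (q1 p - q1 x) + (q2 p - q2 x))). intros; ring.
    apply small_plus; auto.
  - apply (small_ext (fun p => (sg (q1 p) - sg (q1 x)) + (sg (q2 p) - sg (q2 x)))). intros; ring.
    apply small_plus; auto.
  - apply (small_ext (fun p => -1 * (q2 p - q2 x) + 2 * (q1 p - q1 x))). intros; ring.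
    apply small_plus; apply small_lin; auto.
Qed.


Lemma sg_0 : sg 0 = 0.
Proof. unfold sg. rewrite cos_0, sin_0. field. Qed.
Lemma dl_0 : dl 0 = 2.
Proof. unfold dl. rewrite cos_0, sin_0. field. Qed.

Definition L0 : list (kind * R) := (Rk, 3*(PI/2)) :: (Sk, 0) :: (Lk, 0) :: (Sk, 2) :: (Lk, 3*(PI/2)) :: (Sk, 0) :: (Lk, 0) :: (Sk, 0) :: (Rk, 0) :: nil.
Definition L1 : list (kind * R) := (Rk, 0) :: (Sk, 0) :: (Lk, 0) :: (Sk, 0) :: (Lk, 3*(PI/2)) :: (Sk, 2) :: (Lk, 0) :: (Sk, 0) :: (Rk, 3*(PI/2)) :: nil.

Lemma fam0 : fam 0 = L0.
Proof.
  unfold fam, famq, q1, q2, L0.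
  rewrite Rmin_left by lra. rewrite Rmin_right by lra.
  replace (PI * 0) with 0 by ring. replace (PI * (1/2)) with (PI/2) by field.
  rewrite sg_0, sg_PI2, dl_0, dl_PI2.
  repeat (apply f_equal2; [apply f_equal2; [reflexivity| field]|]); reflexivity.
Qed.

Lemma fam1 : fam 1 = L1.
Proof.
  unfold fam, famq, q1, q2, L1.
  rewrite Rmin_right by lra. replace (1 - 1) with 0 by ring. rewrite Rmin_left by lra.
  replace (PI * 0) with 0 by ring. replace (PI * (1/2)) with (PI/2) by field.
  rewrite sg_0, sg_PI2, dl_0, dl_PI2.
  repeat (apply f_equal2; [apply f_equal2; [reflexivity| field]|]); reflexivity.
Qed.

Ltac sidec := try unfold nneg; repeat apply List.Forall_cons; try apply List.Forall_nil; simpl; lra.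
Ltac hev := repeat first [ rewrite hd_cons_in by sidec | rewrite hd_cons_ge by sidec ].

Lemma rot_form u a : rot u (cos a, sin a) = (cos (u + a), sin (u + a)).
Proof. unfold rot; simpl. rewrite cos_plus, sin_plus. f_equal; ring. Qed.

Lemma RSL0 : is_RSL (tot L0) (dgP L0).
Proof.
  pose proof PI_RGT_0. pose proof PI_4.
  exists (3*(PI/2)), 2, (3*(PI/2)).
  split; [lra|]. split; [lra|]. split; [lra|]. split; [simpl; lra|].
  assert (Hd0 : dgP L0 0 = (1, 0)).
  { unfold dgP. unfold L0. hev; cbn [cv]. cbn [cv]. replace (-1 * 0) with 0 by ring. rewrite cos_0, sin_0. reflexivity. }
  split; [|split].
  - intros t Ht. unfold Icc in Ht. rewrite Hd0. unfold dgP, L0. hev; cbn [cv].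
    unfold rot; simpl. f_equal; [replace (-1 * t) with (- t) by ring; ring|replace (-1 * t) with (- t) by ring; ring].
  - intros t Ht. unfold Icc in Ht. unfold dgP, L0. hev; cbn [cv].
    assert (3 * (PI/2) <= 3 * (PI/2) <= 3 * (PI/2) + 2) by lra. hev; cbn [cv].
    f_equal; f_equal; ring.
  - intros t Ht. unfold Icc in Ht.
    replace (tot L0) with (3*(PI/2) + 2 + 3*(PI/2)) in Ht by (unfold L0; simpl; ring).
    unfold dgP, L0. hev; cbn [cv]. rewrite rot_form. f_equal; f_equal; ring.
Qed.

Lemma LSR1 : is_LSR (tot L1) (dgP L1).
Proof.
  pose proof PI_RGT_0. pose proof PI_4.
  exists (3*(PI/2)), 2, (3*(PI/2)).
  split; [lra|]. split; [lra|]. split; [lra|]. split; [unfold L1; simpl; lra|].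
  assert (Hd0 : dgP L1 0 = (cos 0, sin 0)).
  { unfold dgP. unfold L1. hev; cbn [cv]. f_equal; f_equal; ring. }
  split; [|split].
  - intros t Ht. unfold Icc in Ht. rewrite Hd0, rot_form. unfold dgP, L1. hev; cbn [cv].
    f_equal; f_equal; ring.
  - intros t Ht. unfold Icc in Ht. unfold dgP, L1. hev; cbn [cv].
    assert (3 * (PI/2) <= 3 * (PI/2) <= 3 * (PI/2) + 2) by lra. hev; cbn [cv].
    f_equal; f_equal; ring.
  - intros t Ht. unfold Icc in Ht.
    replace (tot L1) with (3*(PI/2) + 2 + 3*(PI/2)) in Ht by (unfold L1; simpl; ring).
    unfold dgP, L1. hev; cbn [cv]. rewrite rot_form. f_equal; f_equal; ring.
Qed.


Lemma bcp_fam p : 0 <= p <= 1 ->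
  bcp (0, 0) (1, 0) (-2, 0) (1, 0) (tot (fam p)) (gP (fam p)) (dgP (fam p)).
Proof.
  intros Hp. destruct (fam_props p Hp) as [HN [HT [HR [HX HY]]]].
  pose proof (bcp_of _ HN HT HR) as B. rewrite HX, HY in B. exact B.
Qed.

Lemma len_fam p : length (fam p) = 9%nat.
Proof. reflexivity. Qed.

Lemma fst_fam p q : map fst (fam p) = map fst (fam q).
Proof. reflexivity. Qed.

Theorem mainTheorem3 :
  exists (x X y Y : vec) (s1 : R) (g1 dg1 : R -> vec) (s2 : R) (g2 dg2 : R -> vec),
    bcp x X y Y s1 g1 dg1 /\ is_RSL s1 dg1 /\
    bcp x X y Y s2 g2 dg2 /\ is_LSR s2 dg2 /\
    bounded_homotopic x X y Y s1 g1 dg1 s2 g2 dg2.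
Proof.
  exists (0, 0), (1, 0), (-2, 0), (1, 0), (tot (fam 0)), (gP (fam 0)), (dgP (fam 0)),
    (tot (fam 1)), (gP (fam 1)), (dgP (fam 1)).
  split; [apply bcp_fam; lra|].
  split; [rewrite fam0; exact RSL0|].
  split; [apply bcp_fam; lra|].
  split; [rewrite fam1; exact LSR1|].
  exists (fun p => tot (fam p)), (fun p => gP (fam p)), (fun p => dgP (fam p)).
  split; [intros p Hp; apply bcp_fam; exact Hp|].
  split.
  2: { split; [reflexivity|]. split; [intros; split; reflexivity|].
       split; [reflexivity|]. intros; split; reflexivity. }
  intros p0 Hp0 eps Heps.
  destruct (fam_props p0 Hp0) as [HN0 _].
  pose proof (tot_nonneg _ HN0) as HT0.
  set (K := 2 * (1 + 2 * 9 * tot (fam p0))).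
  assert (HK : 0 < K) by (unfold K; lra).
  destruct (small_pdist p0 Hp0 (eps / (K + 1))) as [d [Hd Hsm]].
  { apply Rdiv_lt_0_compat; lra. }
  exists d. split; auto.
  intros p Hp Hpp t Ht.
  destruct (fam_props p Hp) as [HN _].
  specialize (Hsm p Hpp).
  pose proof (pdist_pos (fam p) (fam p0)) as Hpd.
  rewrite Rabs_right in Hsm by lra.
  destruct (homot_est (fam p) (fam p0) t (fst_fam p p0) HN HN0 Ht) as [E1 E2].
  rewrite len_fam in E1, E2. simpl INR in E1, E2.
  set (pd := pdist (fam p) (fam p0)) in *.
  assert (HKpd : K * pd < eps).
  { apply Rlt_le_trans with (K * (eps / (K + 1))).
    - apply Rmult_lt_compat_l; auto.
    - unfold Rdiv. rewrite <- Rmult_assoc. apply Rmult_le_reg_r with (K + 1). lra.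
      rewrite Rmult_assoc, Rinv_l by lra. nra. }
  assert (2 * (1 + (1 + 1 + 1 + 1 + 1 + 1 + 1 + 1 + 1) * tot (fam p0)) * pd <= K * pd).
  { apply Rmult_le_compat_r; auto. unfold K. lra. }
  assert (2 * (1 + 2 * (1 + 1 + 1 + 1 + 1 + 1 + 1 + 1 + 1) * tot (fam p0)) * pd <= K * pd).
  { apply Rmult_le_compat_r; auto. unfold K. lra. }
  split; lra.
Qed.
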